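(* In the quantum switch model of the context (with $W=\infty$), suppose the entanglement swapping success probability is $q=1$ and $(\lambda_{ij}+\epsilon)_{i,j\in\mathcal K}\in\Lambda$ for some $\epsilon>0$. Then the quantum switch is stable under any on-demand protocol $\pi_{\mathrm{od}}$.
   Context: Quantum switch model. There are $K$ end nodes $\mathcal K=\{1,\dots,K\}$ and a switch (node $0$); time is slotted, $t=0,1,2,\dots$; pair-indexed quantities are symmetric in $(i,j)$. In slot $t$: (i) $C_{0i}(t)\in\{0,1\}$ EPR pairs are generated between the switch and node $i$, where $\{C_{0i}(t)\}_{t\ge0}$ are mutually independent Bernoulli processes (i.i.d. in $t$) with mean $p_i$. (ii) The switch chooses nonnegative integers $F_{ij}(t)=F_{ji}(t)$ (entanglement swaps for pair $(i,j)$, each consuming one stored switch–$i$ and one stored switch–$j$ pair) with $\sum_iF_{ij}(t)\le E_{0j}(t)$; no limit on swaps per slot ($W=\infty$); each swap succeeds independently with probability $q$; $R_{ij}(t)$ is the number of successes. (iii) $A_{ij}(t)\in\mathbb N$ new requests for pair $(i,j)$ arrive. Dynamics: $U_{ij}(t+1)=[U_{ij}(t)-E_{ij}(t)-R_{ij}(t)]^++A_{ij}(t)$, $E_{ij}(t+1)=[E_{ij}(t)+R_{ij}(t)-U_{ij}(t)]^+$, $E_{0i}(t+1)=E_{0i}(t)-\sum_jF_{ij}(t)+C_{0i}(t)$, with zero initial values; $U_{ij}$ = pending requests, $E_{ij}$ = stored $i$–$j$ pairs, $E_{0i}$ = stored switch–$i$ pairs; memory unlimited, no decoherence. Requests: $\{A_{ij}(t)\}_t$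 mutually independent across pairs, each stationary ergodic with rate $\lambda_{ij}$ (so $\frac1t\sum_{\tau<t}A_{ij}(\tau)\to\lambda_{ij}$ a.s.), and $\mathbb E[A_{ij}(t)^2\mid H(t)=h]\le A_{\max}^2$ for every $t,i,j$ and realization $h$ of the history $H(t)=(E_{ij}(\tau),U_{ij}(\tau),A_{ij}(\tau),R_{ij}(\tau),C_{0i}(\tau))_{\tau=0}^{t-1}$. Stability: for all $i,j$, $\limsup_{t\to\infty}\frac1t\sum_{\tau=0}^{t-1}\mathbb P[U_{ij}(\tau)>V]\to0$ as $V\to\infty$. $\Lambda$ is the set of nonnegative matrices $(\lambda_{ij})$ for which there exist nonnegative $f_{ij}=f_{ji}$ with $\sum_if_{ij}\le p_j$ for all $j$ and $\lambda_{ij}\le qf_{ij}$ for all $i,j$. On-demand protocols: a protocol is on-demand if in every slot $t$ its choices $F_{ij}=F_{ij}(t)$ satisfy $\sum_{i\in\mathcal K}F_{ij}\le E_{0j}(t)$ for all $j$; $F_{ij}\le U_{ij}(t)$ for all $i,j$; $F_{ij}=F_{ji}\in\mathbb N$; and $\big(E_{0i}(t)-\sum_kF_{ik}\big)\big(E_{0j}(t)-\sum_kF_{kj}\big)\big(U_{ij}(t)-F_{ij}\big)=0$ for all $i,j$ (any choice satisfying these may be used). *)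

(* Defs.v *)
From HB Require Import structures.
From mathcomp Require Import all_boot all_order all_algebra.
From mathcomp Require Import all_classical all_reals all_analysis.
Set Implicit Arguments. Unset Strict Implicit. Unset Printing Implicit Defensive.
Import Order.TTheory GRing.Theory Num.Theory.
Local Open Scope classical_set_scope.
Local Open Scope ring_scope.

(* Deterministic sample-path dynamics of the quantum switch, q = 1     *)
(* (so R_ij(t) = F_ij(t)).  Nodes are 'I_K.                           *)
(*   c t i       = C_{0i}(t)                                          *)
(*   a t i j     = A_{ij}(t)                                          *)
(*   f t i j     = F_{ij}(t)                                          *)
(* A state is (E_0, U, E).  Nat subtraction is truncated, i.e. [.]^+.  *)
Definition sw_state (K : nat) :=
  (('I_K -> nat) * ('I_K -> 'I_K -> nat) * ('I_K -> 'I_K -> nat))%type.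

Definition sw_E0 K (s : sw_state K) := s.1.1.
Definition sw_U K (s : sw_state K) := s.1.2.
Definition sw_E K (s : sw_state K) := s.2.

Fixpoint sw_path (K : nat) (c : nat -> 'I_K -> nat)
    (a : nat -> 'I_K -> 'I_K -> nat) (f : nat -> 'I_K -> 'I_K -> nat)
    (t : nat) : sw_state K :=
  match t with
  | 0 => (fun _ => 0%N, fun _ _ => 0%N, fun _ _ => 0%N)
  | t'.+1 =>
    let s := sw_path c a f t' in
    ((fun i => (sw_E0 s i - \sum_(j < K) f t' i j + c t' i)%N,
      fun i j => (sw_U s i j - sw_E s i j - f t' i j + a t' i j)%N),
     fun i j => (sw_E s i j + f t' i j - sw_U s i j)%N)
  end.

Definition on_demand K (s : sw_state K) (F : 'I_K -> 'I_K -> nat) : Prop :=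
  [/\ forall j, (\sum_(i < K) F i j <= sw_E0 s j)%N,
      forall i j, (F i j <= sw_U s i j)%N,
      forall i j, F i j = F j i &
      forall i j, ((sw_E0 s i - \sum_(k < K) F i k) *
                   (sw_E0 s j - \sum_(k < K) F k j) *
                   (sw_U s i j - F i j))%N = 0%N].

Definition in_Lambda (R : realType) K (q : R) (p : 'I_K -> R)
    (lam : 'I_K -> 'I_K -> R) : Prop :=
  exists f : 'I_K -> 'I_K -> R,
    [/\ forall i j, 0 <= f i j,
        forall i j, f i j = f j i,
        forall j, \sum_(i < K) f i j <= p j &
        forall i j, lam i j <= q * f i j].

Section Prob.
Context (d : measure_display) (T : measurableType d) (R : realType)
        (P : probability T R).

Definition nat_rv (X : T -> nat) : Prop := forall n : nat, measurable (X @^-1` [set n]).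

Definition mutual_indep (I : eqType) (adm : I -> bool) (G : I -> set (set T)) : Prop :=
  forall (ks : seq I) (Es : I -> set T),
    uniq ks -> all adm ks -> (forall k, k \in ks -> G k (Es k)) ->
    P (\bigcap_(k in [set k | k \in ks]) Es k) = (\prod_(k <- ks) P (Es k))%E.

Definition rv_events (X : T -> nat) : set (set T) :=
  [set E | exists S : set nat, E = X @^-1` S].

(* Events determined by finitely many time steps of a nat-valued process
   (a pi-system generating its sigma-field). *)
Definition proc_events (X : T -> nat -> nat) : set (set T) :=
  [set E | exists (n : nat) (S : set ('I_n -> nat)),
     E = [set w | S (fun m : 'I_n => X w m)]].

Definition fam_events (J : Type) (X : J -> T -> nat -> nat) : set (set T) :=
  [set E | exists (n : nat) (S : set (J -> 'I_n -> nat)),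
     E = [set w | S (fun (k : J) (m : 'I_n) => X k w m)]].

Definition stationary (X : T -> nat -> nat) : Prop :=
  forall (n s : nat) (S : set ('I_n -> nat)),
    P [set w | S (fun m : 'I_n => X w (s + m)%N)] =
    P [set w | S (fun m : 'I_n => X w m)].

Definition ergodic (X : T -> nat -> nat) : Prop :=
  forall S : set (nat -> nat),
    (forall x, S x <-> S (fun m => x m.+1)) ->
    measurable [set w | S (X w)] ->
    P [set w | S (X w)] = 0%E \/ P [set w | S (X w)] = 1%E.

End Prob.

Section Prob2.
Context (d : measure_display) (T : measurableType d) (R : realType)
        (P : probability T R).
Local Open Scope ereal_scope.

(* w and w' have the same history H(t) = (E_ij, U_ij, A_ij, R_ij, C_0i)(tau),
   tau < t, where R = F since q = 1. *)
Definition same_history (K : nat) (C : T -> nat -> 'I_K -> nat)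
    (A F : T -> nat -> 'I_K -> 'I_K -> nat) (t : nat) (w w' : T) : Prop :=
  forall tau : nat, (tau < t)%N ->
    (forall i, C w tau i = C w' tau i) /\
    (forall i j,
       [/\ A w tau i j = A w' tau i j,
           F w tau i j = F w' tau i j,
           sw_U (sw_path (C w) (A w) (F w) tau) i j =
             sw_U (sw_path (C w') (A w') (F w') tau) i j &
           sw_E (sw_path (C w) (A w) (F w) tau) i j =
             sw_E (sw_path (C w') (A w') (F w') tau) i j]).

Definition stable_queue (U : T -> nat -> nat) : Prop :=
  (fun V : R => limn_esup (fun n : nat =>
      ((n%:R)^-1)%:E * \sum_(tau < n) P [set w | (V < (U w tau)%:R)%R]))
    x @[x --> +oo%R] --> 0.

End Prob2.

Import numFieldNormedType.Exports.
Definition avg_cvg_to (R : realType) (a : nat -> nat) (l : R) : Prop :=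
  ((t%:R)^-1 * \sum_(tau < t) (a tau)%:R) @[t --> \oo] --> l.

(* Main.v *)
Require Import Defs.
From HB Require Import structures.
From mathcomp Require Import all_boot all_order all_algebra.
From mathcomp Require Import all_classical all_reals all_analysis measurable_realfun.
From mathcomp Require Import lra.
From mathcomp Require Import zify.
Import Order.TTheory GRing.Theory Num.Theory.
Import numFieldNormedType.Exports.
Local Open Scope classical_set_scope.
Local Open Scope ring_scope.

Lemma sumS (F : nat -> nat) t : (\sum_(i < t.+1) F i = \sum_(i < t) F i + F t)%N.
Proof. by rewrite big_ord_recr. Qed.

Ltac setsum := repeat match goal with |- context [@bigop.body nat ?I ?z ?r ?F] =>
  let s := fresh "s" in set s := @bigop.body nat I z r F end.

Section Det.
Variables (K : nat) (c : nat -> 'I_K -> nat) (a f : nat -> 'I_K -> 'I_K -> nat).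
Hypothesis od : forall t, on_demand (sw_path c a f t) (f t).

Lemma det_inv t :
 [/\ forall x y, sw_E (sw_path c a f t) x y = 0%N,
     forall x y, (sw_U (sw_path c a f t) x y + \sum_(tau < t) f tau x y = \sum_(tau < t) a tau x y)%N &
     forall x, (sw_E0 (sw_path c a f t) x + \sum_(tau < t) \sum_(m < K) f tau x m = \sum_(tau < t) c tau x)%N].
Proof.
elim: t => [|t [IE IU IE0]].
  by split => *; rewrite /= ?big_ord0.
have [Hcol HU Hsym _] := od t.
split.
- move=> x y; rewrite /sw_E /= -/(sw_E _) IE; have := HU x y; lia.
- move=> x y; rewrite /sw_U /= -/(sw_U _) -/(sw_E _) IE (sumS (fun n => f n x y)) (sumS (fun n => a n x y)).
  have := HU x y; have := IU x y; lia.
- move=> x; rewrite /sw_E0 /= -/(sw_E0 _) (sumS (fun n => (\sum_(m < K) f n x m)%N)) (sumS (fun n => c n x)).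
  have H1 : (\sum_(m < K) f t x m <= sw_E0 (sw_path c a f t) x)%N.
    by rewrite (eq_bigr (fun m => f t m x)) ?Hcol // => m _; rewrite Hsym.
  have := IE0 x; set S := (\sum_(m < K) f t x m)%N in H1 *; lia.
Qed.

Lemma det_main t i j :
  (\sum_(m < K) \sum_(tau < t) a tau i m < \sum_(tau < t) c tau i)%N ->
  (\sum_(m < K) \sum_(tau < t) a tau j m < \sum_(tau < t) c tau j)%N ->
  sw_U (sw_path c a f t.+1) i j = a t i j.
Proof.
move=> Hi Hj.
have [IE IU IE0] := det_inv t.
have [Hcol HU Hsym Hprod] := od t.
have key x : (\sum_(m < K) \sum_(tau < t) a tau x m < \sum_(tau < t) c tau x)%N ->
   (0 < sw_E0 (sw_path c a f t) x - \sum_(k < K) f t x k)%N.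
  move=> Hx.
  have H1 : (\sum_(tau < t) \sum_(m < K) f tau x m + \sum_(k < K) f t x k
             <= \sum_(m < K) \sum_(tau < t) a tau x m)%N.
    rewrite exchange_big /= -big_split /=; apply: leq_sum => m _.
    have := HU x m; have := IU x m; setsum; lia.
  have := IE0 x; lia.
have Pi := key i Hi; have Pj := key j Hj.
have Pj' : (0 < sw_E0 (sw_path c a f t) j - \sum_(k < K) f t k j)%N.
  by rewrite (eq_bigr (fun k => f t j k)) // => k _; rewrite Hsym.
have := Hprod i j.
rewrite /sw_U /= -/(sw_U _) -/(sw_E _) IE.
move=> H0; have HUF := HU i j.
have : (sw_U (sw_path c a f t) i j - f t i j = 0)%N.
  case: (posnP (sw_U (sw_path c a f t) i j - f t i j)) => // Hpos; exfalso.
  have : (0 < (sw_E0 (sw_path c a f t) i - \sum_(k < K) f t i k) *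
     (sw_E0 (sw_path c a f t) j - \sum_(k < K) f t k j) *
     (sw_U (sw_path c a f t) i j - f t i j))%N by rewrite !muln_gt0 Pi Pj' Hpos.
  by rewrite H0.
setsum; lia.
Qed.
End Det.
Section Meas.
Context (d : measure_display) (T : measurableType d).

Lemma natm_pred (X : T -> nat) (Q : nat -> Prop) : nat_rv X ->
  measurable [set w | Q (X w)].
Proof.
move=> hX.
have -> : [set w | Q (X w)] = \bigcup_n (X @^-1` [set n] `&` [set _ | Q n]).
  apply/seteqP; split => w /=.
    by move=> Hq; exists (X w) => //.
  by move=> [n _ [/= -> Hq]].
apply: bigcupT_measurable => n; apply: measurableI; first exact: hX.
by case: (pselect (Q n)) => h; [rewrite (_ : [set _ | Q n] = setT) //; apply/seteqP; split|
  rewrite (_ : [set _ | Q n] = set0) //; apply/seteqP; split].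
Qed.

Lemma natm_pred2 (X Y : T -> nat) (Q : nat -> nat -> Prop) : nat_rv X -> nat_rv Y ->
  measurable [set w | Q (X w) (Y w)].
Proof.
move=> hX hY.
have -> : [set w | Q (X w) (Y w)] = \bigcup_n \bigcup_m
    (X @^-1` [set n] `&` [set w | Q n (Y w) /\ m = 0%N]).
  apply/seteqP; split => w /=.
    by move=> Hq; exists (X w) => //; exists 0%N.
  by move=> [n _ [m _ [/= -> [Hq _]]]].
apply: bigcupT_measurable => n; apply: bigcupT_measurable => m.
apply: measurableI; first exact: hX.
exact: (natm_pred Y (fun k => Q n k /\ m = 0%N) hY).
Qed.

Lemma natm2 (X Y : T -> nat) (g : nat -> nat -> nat) : nat_rv X -> nat_rv Y ->
  nat_rv (fun w => g (X w) (Y w)).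
Proof. by move=> hX hY n; exact: (natm_pred2 X Y (fun a b => g a b = n) hX hY). Qed.

Lemma natm_cst (c : nat) : nat_rv (fun _ : T => c).
Proof.
move=> n; case: (pselect (c = n)) => h.
  by rewrite (_ : _ @^-1` _ = setT) //; apply/seteqP; split.
by rewrite (_ : _ @^-1` _ = set0) //; apply/seteqP; split.
Qed.

Lemma natm_sum (I : Type) (s : seq I) (X : I -> T -> nat) :
  (forall k, nat_rv (X k)) -> nat_rv (fun w => (\sum_(k <- s) X k w)%N).
Proof.
move=> hX; elim: s => [|k s IH].
  by under [fun w => _]funext do rewrite big_nil; exact: natm_cst.
under [fun w => _]funext do rewrite big_cons.
exact: natm2.
Qed.

Lemma natm_path K (C : T -> nat -> 'I_K -> nat) (A F : T -> nat -> 'I_K -> 'I_K -> nat) :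
  (forall t i, nat_rv (fun w => C w t i)) ->
  (forall t i j, nat_rv (fun w => A w t i j)) ->
  (forall t i j, nat_rv (fun w => F w t i j)) ->
  forall t, [/\ forall i, nat_rv (fun w => sw_E0 (sw_path (C w) (A w) (F w) t) i),
     forall i j, nat_rv (fun w => sw_U (sw_path (C w) (A w) (F w) t) i j) &
     forall i j, nat_rv (fun w => sw_E (sw_path (C w) (A w) (F w) t) i j)].
Proof.
move=> hC hA hF; elim=> [|t [h0 hU hE]].
  by split => *; exact: natm_cst.
split => *; rewrite /sw_E0 /sw_U /sw_E /=.
- apply: natm2; last exact: hC.
  apply: natm2; first exact: h0.
  exact: natm_sum.
- apply: natm2; last exact: hA.
  apply: natm2; last exact: hF.
  by apply: natm2; [exact: hU| exact: hE].
- apply: natm2; last exact: hU.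
  by apply: natm2; [exact: hE| exact: hF].
Qed.

End Meas.
Arguments natm_pred {d T X Q}.
Arguments natm_pred2 {d T X Y Q}.
Arguments natm2 {d T X Y} g.
Arguments natm_cst {d T}.
Arguments natm_sum {d T I} s {X}.

Section Integ.
Context (d : measure_display) (T : measurableType d) (R : realType) (P : probability T R).

Lemma P_fin (S : set T) : measurable S -> P S = (fine (P S))%:E.
Proof.
move=> mS; rewrite fineK // ge0_fin_numE //.
exact: (le_lt_trans (probability_le1 P mS) (ltey _)).
Qed.

Arguments P_fin {S}.

Lemma pr_ge0 (S : set T) : 0 <= fine (P S).
Proof. exact: fine_ge0. Qed.

Lemma pr_le1 (S : set T) : measurable S -> fine (P S) <= 1.
Proof.
move=> mS; have := probability_le1 P mS.
by rewrite [X in (X <= _)%E](P_fin mS) lee_fin.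
Qed.

Lemma int_lin (I : Type) (s : seq I) (cf : I -> R) (Af : I -> set T) :
  (forall x, 0 <= cf x) -> (forall x, measurable (Af x)) ->
  (\int[P]_w (\sum_(x <- s) cf x * \1_(Af x) w)%:E =
   (\sum_(x <- s) cf x * fine (P (Af x)))%:E)%E.
Proof.
move=> c0 mA.
under eq_integral do rewrite -sumEFin.
rewrite ge0_integral_sum //; last first.
- by move=> x w _; rewrite lee_fin mulr_ge0.
- move=> x; apply/measurable_realfun.measurable_EFinP.
  apply: measurable_realfun.measurable_funM; first exact: measurable_cst.
  exact: measurable_realfun.measurable_indic.
rewrite -sumEFin; apply: eq_bigr => x _.
rewrite (@integralZl_indic _ _ _ _ _ measurableT (fun _ => Af x) (cf x)) //; last first.
  by move=> h; exfalso; move: h; rewrite ltNge c0.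
by rewrite integral_indic // setIT [X in (_ * X)%E = _](P_fin (mA x)) -EFinM.
Qed.

End Integ.
Arguments P_fin {d T R P S}.
Arguments pr_ge0 {d T R P}.
Arguments pr_le1 {d T R P S}.

Section Cheb.
Context (d : measure_display) (T : measurableType d) (R : realType) (P : probability T R).

Lemma meas_lin (I : Type) (s : seq I) (cf : I -> R) (Af : I -> set T) :
  (forall x, measurable (Af x)) ->
  measurable_fun setT (fun w => (\sum_(x <- s) cf x * \1_(Af x) w)%:E).
Proof.
move=> mA; apply/measurable_realfun.measurable_EFinP.
apply: measurable_sum => x.
apply: measurable_realfun.measurable_funM; first exact: measurable_cst.
exact: measurable_realfun.measurable_indic.
Qed.

Lemma lin_ge0 (I : Type) (s : seq I) (cf : I -> R) (Af : I -> set T) w :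
  (forall x, 0 <= cf x) -> 0 <= \sum_(x <- s) cf x * \1_(Af x) w.
Proof. by move=> c0; apply: sumr_ge0 => x _; rewrite mulr_ge0. Qed.

Lemma cheb (X : nat -> T -> nat) (p de : R) (t : nat) :
  (forall tau w, (X tau w <= 1)%N) -> (forall tau, nat_rv (X tau)) ->
  (forall tau, P [set w | X tau w = 1%N] = p%:E) ->
  (forall tau tau', tau <> tau' ->
     P ([set w | X tau w = 1%N] `&` [set w | X tau' w = 1%N]) = (p * p)%:E) ->
  0 < de -> (0 < t)%N ->
  fine (P [set w | ((\sum_(tau < t) X tau w)%N)%:R <= (p - de) * t%:R])
    <= (de ^+ 2 * t%:R)^-1.
Proof.
move=> hle hX hp hpp de0 t0.
pose S tau := [set w | X tau w = 1%N].
have mS tau : measurable (S tau) := natm_pred (Q := fun n => n = 1%N) (hX tau).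
pose G w := (\sum_(tau < t) X tau w)%N.
pose B := [set w | (G w)%:R <= (p - de) * t%:R].
have mB : measurable B.
  exact: (natm_pred (X := G) (Q := fun n => n%:R <= (p - de) * t%:R) (natm_sum _ (fun tau : 'I_t => hX tau))).
have pE tau : fine (P (S tau)) = p by rewrite hp.
have p0 : 0 <= p by rewrite -(pE 0%N) pr_ge0.
have p1 : p <= 1 by rewrite -(pE 0%N) pr_le1.
have ind tau w : (X tau w)%:R = \1_(S tau) w :> R.
  rewrite indicE; have := hle tau w.
  case E: (X tau w) => [|[|]] //= _.
    by rewrite memNset // /S /= E.
  by rewrite mem_set // /S /= E.
have Gg w : (G w)%:R = \sum_(tau < t) \1_(S tau) w :> R.
  by rewrite /G natr_sum; apply: eq_bigr => tau _; exact: ind.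
pose s1 := None :: map Some (index_enum 'I_t).
pose c1 (x : option 'I_t) := if x is Some _ then 2 * p * t%:R else (de * t%:R) ^+ 2.
pose A1 (x : option 'I_t) := if x is Some tau then S (nat_of_ord tau) else B.
pose s2 := None :: map Some (index_enum ('I_t * 'I_t)%type).
pose c2 (x : option ('I_t * 'I_t)) := if x is Some _ then 1 else (p * t%:R) ^+ 2.
pose A2 (x : option ('I_t * 'I_t)) := if x is Some ab then S (nat_of_ord ab.1) `&` S (nat_of_ord ab.2) else setT.
have c10 x : 0 <= c1 x by case: x => [?|] /=; [rewrite !mulr_ge0 | exact: sqr_ge0].
have c20 x : 0 <= c2 x by case: x => [?|] /=; [exact: ler01 | exact: sqr_ge0].
have mA1 x : measurable (A1 x) by case: x => [?|] /=; [exact: mS | exact: mB].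
have mA2 x : measurable (A2 x) by case: x => [[? ?]|] /=; [exact: measurableI | exact: measurableT].
have pw w : \sum_(x <- s1) c1 x * \1_(A1 x) w <= \sum_(x <- s2) c2 x * \1_(A2 x) w.
  rewrite !big_cons !big_map /=.
  rewrite -(pair_bigA _ (fun a b => 1 * \1_(S (nat_of_ord a) `&` S (nat_of_ord b)) w)) /=.
  have -> : \sum_(i < t) \sum_(j < t) 1 * \1_(S i `&` S j) w = ((G w)%:R) ^+ 2 :> R.
    rewrite Gg expr2 big_distrlr /=; apply: eq_bigr => i _; apply: eq_bigr => j _.
    by rewrite mul1r indicI.
  rewrite -mulr_sumr -Gg indicT /= mulr1.
  rewrite indicE; case: (boolP (w \in B)) => hB.
    move: hB; rewrite inE /= => hB.
    have h1 : de * t%:R <= p * t%:R - (G w)%:R by move: hB; rewrite /B /= mulrBl; lra.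
    have h2 : 0 <= de * t%:R by rewrite mulr_ge0 // ltW.
    rewrite mulr1; nra.
  rewrite mulr0 add0r; have := sqr_ge0 (p * t%:R - (G w)%:R); nra.
have H : (\int[P]_w (\sum_(x <- s1) c1 x * \1_(A1 x) w)%:E <=
           \int[P]_w (\sum_(x <- s2) c2 x * \1_(A2 x) w)%:E)%E.
  apply: ge0_le_integral => //.
  - by move=> w _; rewrite lee_fin; apply: lin_ge0.
  - exact: meas_lin.
  - exact: meas_lin.
  - by move=> w _; rewrite lee_fin.
rewrite !int_lin // lee_fin in H.
move: H; rewrite !big_cons !big_map /=.
have Esum (x : R) : \sum_(i < t) x = t%:R * x by rewrite sumr_const card_ord mulr_natl.
have Hr : \sum_(j : 'I_t * 'I_t) 1 * fine (P (S j.1 `&` S j.2)) <=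
          t%:R * p + t%:R * (t%:R * (p * p)).
  rewrite -(pair_bigA _ (fun a b => 1 * fine (P (S (nat_of_ord a) `&` S (nat_of_ord b))))) /=.
  apply: le_trans (_ : _ <= \sum_(a < t) (p + t%:R * (p * p))) _; last first.
    by rewrite Esum mulrDr.
  apply: ler_sum => a _; rewrite (bigD1 a) //= setIid pE mul1r lerD2l.
  rewrite (eq_bigr (fun _ => p * p)); last first.
    move=> b hb; rewrite mul1r hpp //.
    by move=> h; move/eqP: hb; apply; apply: val_inj.
  apply: le_trans (_ : _ <= \sum_(b < t) p * p) _; last first.
    by rewrite Esum.
  by rewrite [X in _ <= X](bigD1 a) //= lerDr mulr_ge0.
rewrite (eq_bigr (fun _ => 2 * p * t%:R * p)); last by move=> j _; rewrite pE.
rewrite Esum probability_setT /= mulr1 => H.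
set PB := fine (P B) in H *.
have PB0 : 0 <= PB by exact: pr_ge0.
have ht : 0 < t%:R :> R by rewrite ltr0n.
have H2 : (de * t%:R) ^+ 2 * PB <= t%:R.
  move: H Hr; rewrite -mulr_natl; nra.
rewrite -[X in _ <= X]div1r ler_pdivlMr ?mulr_gt0 ?exprn_gt0 //.
have : t%:R * (PB * (de ^+ 2 * t%:R)) <= t%:R * 1.
  by rewrite mulr1; move: H2; rewrite expr2; nra.
by rewrite ler_pM2l.
Qed.
End Cheb.
Section Tails.
Context (d : measure_display) (T : measurableType d) (R : realType) (P : probability T R).

Lemma cvg_fineP0 (E : nat -> set T) : (forall n, measurable (E n)) ->
  (P \o E) n @[n --> \oo] --> 0%E -> (fun n => fine (P (E n))) @ \oo --> 0.
Proof. by move=> mE /fine_cvg. Qed.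

Lemma tail0 (Z : T -> nat) : nat_rv Z ->
  (fun V : R => fine (P [set w | V < (Z w)%:R])) x @[x --> +oo] --> 0.
Proof.
move=> hZ.
pose F n := [set w | n%:R < (Z w)%:R :> R].
have mF n : measurable (F n) := natm_pred (Q := fun k => n%:R < k%:R) hZ.
have capF : \bigcap_n F n = set0.
  apply/seteqP; split => // w /= H; have := H (Z w) I; by rewrite /F /= ltxx.
have Fni : nonincreasing_seq F.
  move=> n m nm; apply/subsetPset => w; rewrite /F /= => h.
  by apply: le_lt_trans h; rewrite ler_nat.
have mcap : measurable (\bigcap_n F n) by rewrite capF.
have := @nonincreasing_cvg_mu _ _ _ P F (le_lt_trans (probability_le1 P (mF 0%N)) (ltey _)) mF
  mcap Fni.
rewrite capF measure0 => /fine_cvg cv.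
apply/cvgrPdist_le => e e0.
have /cvgrPdist_le/(_ e e0) [N _ HN] := cv.
exists N%:R; split; first exact: num_real.
move=> V hV.
have := HN N (leqnn N); rewrite /= !sub0r !normrN !ger0_norm ?pr_ge0 //.
apply: le_trans; apply: fine_le.
- by rewrite ge0_fin_numE // (le_lt_trans (probability_le1 _ _) (ltey _)) //; apply: (natm_pred (Q := fun k => V < k%:R)).
- by rewrite ge0_fin_numE // (le_lt_trans (probability_le1 _ _) (ltey _)).
- apply: le_measure; rewrite ?inE //; first exact: (natm_pred (Q := fun k => V < k%:R)).
  by move=> w /=; apply: lt_trans.
Qed.

Lemma ae_tail (Y : nat -> T -> nat) (L c : R) : L < c -> (forall t, nat_rv (Y t)) ->
  {ae P, forall w, ((t%:R)^-1 * (Y t w)%:R) @[t --> \oo] --> L} ->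
  (fun t => fine (P [set w | c * t%:R < (Y t w)%:R])) @ \oo --> 0.
Proof.
move=> Lc hY [N [mN PN0 HN]].
pose D s := [set w | c * s%:R < (Y s w)%:R].
have mD s : measurable (D s) := natm_pred (Q := fun k => c * s%:R < k%:R) (hY s).
pose E t := \bigcup_s (if (t <= s)%N then D s else set0).
have mE t : measurable (E t).
  apply: bigcupT_measurable => s; case: ifP => _ //; exact: mD.
have Eni : nonincreasing_seq E.
  move=> n m nm; apply/subsetPset => w [s _]; case: ifP => // ms Ds.
  by exists s => //; rewrite (leq_trans nm ms).
have capE : \bigcap_n E n `<=` N.
  move=> w Hw; apply: HN => /= hcv.
  have /cvgr_lt/(_ c Lc) [s0 _ Hs0] := hcv.
  have [s _] := Hw s0.+1 I; case: ifP => // hs.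
  rewrite /D /= => Hlt.
  have := Hs0 s (ltnW hs); rewrite /= ltr_pdivrMl ?ltr0n ?(leq_trans _ hs) //.
  by rewrite mulrC ltNge (ltW Hlt).
have mcap : measurable (\bigcap_n E n) by apply: bigcapT_measurable.
have Pcap : P (\bigcap_n E n) = 0%E.
  apply/eqP; rewrite eq_le measure_ge0 andbT -PN0.
  by apply: le_measure; [rewrite inE; exact: mcap | rewrite inE; exact: mN | exact: capE].
have := @nonincreasing_cvg_mu _ _ _ P E (le_lt_trans (probability_le1 P (mE 0%N)) (ltey _)) mE
  mcap Eni.
match goal with |- _ --> ?x -> _ => have Px : x = 0%E by exact: Pcap end.
rewrite Px => cv0; have cv : (fine \o (P \o E)) n @[n --> \oo] --> 0 by apply: fine_cvg.
apply: (@squeeze_cvgr _ _ _ _ (cst 0) (fine \o (P \o E))); last 2 first.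
- exact: cvg_cst.
- exact: cv.
apply: nearW => t; rewrite pr_ge0 /=; apply: fine_le.
- by rewrite ge0_fin_numE // (le_lt_trans (probability_le1 _ (mD t)) (ltey _)).
- by rewrite ge0_fin_numE // (le_lt_trans (probability_le1 _ (mE t)) (ltey _)).
- apply: le_measure; rewrite ?inE; [exact: mD | exact: mE |].
  by move=> w Dw; exists t => //; rewrite leqnn.
Qed.

End Tails.
Lemma cvg_sum_seq (R : realType) (I : Type) (s : seq I) (u : I -> nat -> R) (l : I -> R) :
  (forall x, u x n @[n --> \oo] --> l x) ->
  (fun n => \sum_(x <- s) u x n) @ \oo --> \sum_(x <- s) l x.
Proof.
move=> h; elim: s => [|x s IH].
  rewrite big_nil; under [fun n => _]funext do rewrite big_nil; exact: cvg_cst.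
rewrite big_cons; under [fun n => _]funext do rewrite big_cons; exact: cvgD.
Qed.

Lemma le_limn_esup (R : realType) (u v : (\bar R)^nat) :
  (forall n, (u n <= v n)%E) -> (limn_esup u <= limn_esup v)%E.
Proof.
move=> uv; rewrite !limn_esup_lim; apply: lee_lim; try exact: is_cvg_esups.
apply: nearW => n; apply: ge_ereal_sup => _ [k nk <-].
apply: le_trans (uv k) _; apply: ereal_sup_ubound; by exists k.
Qed.

Lemma limn_esup_ge0 (R : realType) (u : (\bar R)^nat) :
  (forall n, (0 <= u n)%E) -> (0 <= limn_esup u)%E.
Proof.
move=> u0; rewrite limn_esup_lim; apply: lime_ge; first exact: is_cvg_esups.
apply: nearW => n; apply: le_trans (u0 n) _; apply: ereal_sup_ubound; by exists n => /=.
Qed.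

Lemma inv_cvg0 (R : realType) : (fun t : nat => (t%:R)^-1 : R) @ \oo --> 0.
Proof.
rewrite -cvg_shiftS /=; exact: cvg_harmonic.
Qed.

Theorem theorem5 (d : measure_display) (T : measurableType d) (R : realType)
  (P : probability T R) (K : nat)
  (p : 'I_K -> R) (lam : 'I_K -> 'I_K -> R) (Amax eps : R)
  (C : T -> nat -> 'I_K -> nat)
  (A : T -> nat -> 'I_K -> 'I_K -> nat)
  (F : T -> nat -> 'I_K -> 'I_K -> nat) :
  (forall w t i, (C w t i <= 1)%N) ->
  (forall t i, nat_rv (fun w => C w t i)) ->
  (forall t i, P [set w | C w t i = 1%N] = (p i)%:E) ->
  mutual_indep P (fun _ : 'I_K * nat => true)
    (fun k => rv_events (fun w => C w k.2 k.1)) ->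
  (forall w t i j, A w t i j = A w t j i) ->
  (forall t i j, nat_rv (fun w => A w t i j)) ->
  mutual_indep P (fun k : 'I_K * 'I_K => (k.1 <= k.2)%N)
    (fun k => proc_events (fun w t => A w t k.1 k.2)) ->
  (forall i j, stationary P (fun w t => A w t i j)) ->
  (forall i j, ergodic P (fun w t => A w t i j)) ->
  (forall i j, (\int[P]_w ((A w 0%N i j)%:R)%:E = (lam i j)%:E)%E) ->
  (forall i j, {ae P, forall w,
     avg_cvg_to (fun t => A w t i j) (lam i j)}) ->
  mutual_indep P (fun _ : bool => true)
    (fun b => if b then fam_events (fun i w t => C w t i)
              else fam_events (fun k : 'I_K * 'I_K => fun w t => A w t k.1 k.2)) ->
  (forall t i j w0,
     (\int[P]_(w in [set w | same_history C A F t w w0])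
        (((A w t i j) ^ 2)%N%:R)%:E
      <= (Amax ^+ 2)%:E * P [set w | same_history C A F t w w0])%E) ->
  (forall t i j, nat_rv (fun w => F w t i j)) ->
  (forall w t, on_demand (sw_path (C w) (A w) (F w) t) (F w t)) ->
  0 < eps ->
  in_Lambda 1 p (fun i j => lam i j + eps) ->
  forall i j,
    stable_queue P (fun w t => sw_U (sw_path (C w) (A w) (F w) t) i j).
Proof.
move=> hC1 hCm hCp hCind hAsym hAm hAind hAst hAerg hAE hAcvg hCAind hAmom hFm hod
  eps0 [f [f0 fsym fsum flam]] i j.
pose L k := \sum_(m < K) lam k m.
pose de := eps / 2.
have de0 : 0 < de by rewrite divr_gt0.
have Lp k : L k + eps <= p k.
  apply: le_trans (fsum k).
  apply: le_trans (_ : \sum_(m < K) (lam k m + eps) <= _).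
    rewrite big_split /= lerD2l (bigD1 k) //= lerDl.
    by apply: sumr_ge0 => m _; exact: ltW.
  by apply: ler_sum => m _; rewrite fsym; have := flam k m; rewrite mul1r.
have Lc k : L k < p k - de.
  have := Lp k; rewrite /de; lra.
have mpath := @natm_path _ _ _ C A F hCm hAm hFm.
pose G k t w := (\sum_(tau < t) C w tau k)%N.
pose Lam k t w := (\sum_(m < K) \sum_(tau < t) A w tau k m)%N.
have mG k t : nat_rv (G k t) := natm_sum _ (fun tau : 'I_t => hCm tau k).
have mLam k t : nat_rv (Lam k t) :=
  natm_sum _ (fun m : 'I_K => natm_sum _ (fun tau : 'I_t => hAm tau k m)).
pose Bc k t := [set w | (G k t w)%:R <= (p k - de) * t%:R :> R].
pose Bl k t := [set w | (p k - de) * t%:R < (Lam k t w)%:R :> R].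
pose Bad t := (Bc i t `|` Bl i t) `|` (Bc j t `|` Bl j t).
have mBc k t : measurable (Bc k t) :=
  natm_pred (Q := fun n => n%:R <= (p k - de) * t%:R) (mG k t).
have mBl k t : measurable (Bl k t) :=
  natm_pred (Q := fun n => (p k - de) * t%:R < n%:R) (mLam k t).
have mBad t : measurable (Bad t) by apply: measurableU; apply: measurableU.
have key k t w : ~ (Bc k t w \/ Bl k t w) -> (Lam k t w < G k t w)%N.
  move=> nb; rewrite ltnNge; apply/negP => hle; apply: nb.
  have [h|h] := leP ((Lam k t w)%:R : R) ((p k - de) * t%:R).
    by left; rewrite /Bc /=; apply: le_trans h; rewrite ler_nat.
  by right.
have det t w : ~ Bad t w -> sw_U (sw_path (C w) (A w) (F w) t.+1) i j = A w t i j.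
  move=> nB; apply: det_main => //.
  - by apply: key => h; apply: nB; left.
  - by apply: key => h; apply: nB; right.
pose Uq t w := sw_U (sw_path (C w) (A w) (F w) t) i j.
have mU t : nat_rv (Uq t) by have [_ hU _] := mpath t; exact: hU.
have evb t (V : R) : [set w | V < (Uq t.+1 w)%:R] `<=` Bad t `|` [set w | V < (A w t i j)%:R].
  move=> w /= hV; case: (pselect (Bad t w)) => hB; first by left.
  by right; rewrite /= -(det t w hB).
have stat t (V : R) : P [set w | V < (A w t i j)%:R] = P [set w | V < (A w 0%N i j)%:R].
  have E1 : [set w | V < (A w t i j)%:R] =
      [set w | [set x : 'I_1 -> nat | V < (x ord0)%:R] (fun m : 'I_1 => A w (t + m)%N i j)].
    by apply/seteqP; split => w /=; rewrite addn0.
  have E0 : [set w | V < (A w 0%N i j)%:R] =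
      [set w | [set x : 'I_1 -> nat | V < (x ord0)%:R] (fun m : 'I_1 => A w m i j)].
    by apply/seteqP; split => w /=.
  rewrite E1 E0; exact: hAst.
pose g (V : R) := fine (P [set w | V < (A w 0%N i j)%:R]).
pose beta t := fine (P (Bad t)).
pose beta' n := if n is t.+1 then beta t else 0.
have mA0 (V : R) : measurable [set w | V < (A w 0%N i j)%:R] :=
  natm_pred (Q := fun n => V < n%:R) (hAm 0%N i j).
have mAt t (V : R) : measurable [set w | V < (A w t i j)%:R] :=
  natm_pred (Q := fun n => V < n%:R) (hAm t i j).
have mUV t (V : R) : measurable [set w | V < (Uq t w)%:R] :=
  natm_pred (Q := fun n => V < n%:R) (mU t).
have step tau (V : R) : 0 <= V -> fine (P [set w | V < (Uq tau w)%:R]) <= beta' tau + g V.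
  move=> V0; case: tau => [|t].
    rewrite (_ : [set w | V < (Uq 0%N w)%:R] = set0) ?measure0 /= ?add0r ?pr_ge0 //.
    by apply/seteqP; split => w //=; rewrite ltNge V0.
  rewrite /= /beta /g -lee_fin -!P_fin //.
  apply: le_trans (le_measure _ _ _ (evb t V)) _; rewrite ?inE //.
    exact: measurableU.
  by rewrite -(stat t) EFinD -!P_fin //; apply: measureU2.
have hpair k tau tau' : tau <> tau' ->
    P ([set w | C w tau k = 1%N] `&` [set w | C w tau' k = 1%N]) = (p k * p k)%:E.
  move=> ne.
  have hu : uniq [:: (k, tau); (k, tau')].
    by rewrite /= inE xpair_eqE eqxx /= andbT; apply/eqP.
  have := hCind [:: (k, tau); (k, tau')] (fun x => [set w | C w x.2 x.1 = 1%N]) hu isT.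
  have -> : \bigcap_(x in [set x | x \in [:: (k, tau); (k, tau')]])
      [set w | C w x.2 x.1 = 1%N] = [set w | C w tau k = 1%N] `&` [set w | C w tau' k = 1%N].
    apply/seteqP; split => w.
      move=> H; split.
        by apply: (H (k, tau)); rewrite /= inE eqxx.
      by apply: (H (k, tau')); rewrite /= !inE eqxx orbT.
    by move=> [h1 h2] x; rewrite /= !inE => /orP [] /eqP -> //.
  rewrite !big_cons big_nil mule1 /= !hCp -EFinM; apply.
  by move=> x _; exists [set 1%N].
have hc k : (fun t => fine (P (Bc k t))) @ \oo --> 0.
  apply: (@squeeze_cvgr _ _ _ _ (cst 0) (fun t : nat => (de ^+ 2 * t%:R)^-1)).
  - exists 1%N => // t /= t1; rewrite pr_ge0 /=.
    exact: (@cheb _ _ _ P (fun tau w => C w tau k) (p k) de t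
      (fun tau w => hC1 w tau k) (fun tau => hCm tau k) (fun tau => hCp tau k)
      (hpair k) de0 t1).
  - exact: cvg_cst.
  rewrite (_ : (fun t : nat => (de ^+ 2 * t%:R)^-1) = (fun t => (de ^+ 2)^-1 * (t%:R)^-1)); last first.
    by apply/funext => t; rewrite invfM.
  rewrite -(mulr0 ((de ^+ 2)^-1)); apply: cvgM; [exact: cvg_cst | exact: inv_cvg0].
have hl k : (fun t => fine (P (Bl k t))) @ \oo --> 0.
  apply: (@ae_tail _ _ _ P (Lam k) _ _ (Lc k) (mLam k)).
  have FF := @ae_filter_ringOfSetsType _ _ _ P.
  have := @filter_forall T 'I_K _ (almost_everywhere P) FF (fun m => hAcvg k m).
  move=> H; apply: (@filterS _ _ FF _ _ _ H) => w /= Hw.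
  rewrite (_ : (fun t : nat => (t%:R)^-1 * (Lam k t w)%:R) =
     (fun t => \sum_(m < K) ((t%:R)^-1 * \sum_(tau < t) (A w tau k m)%:R))); last first.
    apply/funext => t; rewrite /Lam natr_sum mulr_sumr; apply: eq_bigr => m _.
    by rewrite natr_sum.
  exact: (@cvg_sum_seq R _ _ (fun m t => (t%:R)^-1 * \sum_(tau < t) (A w tau k m)%:R) _ (fun m => Hw m)).
have hbeta : beta @ \oo --> 0.
  apply: (@squeeze_cvgr _ _ _ _ (cst 0)
    (fun t => fine (P (Bc i t)) + fine (P (Bl i t)) + (fine (P (Bc j t)) + fine (P (Bl j t))))).
  - apply: nearW => t; rewrite pr_ge0 /=.
    rewrite -lee_fin !EFinD -!P_fin //.
    apply: le_trans (measureU2 _ _ _) _; try (by apply: measurableU).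
    by apply: leeD; apply: measureU2.
  - exact: cvg_cst.
  - have := cvgD (cvgD (hc i) (hl i)) (cvgD (hc j) (hl j)); rewrite !addr0; exact.
have hb' : beta' @ \oo --> 0 by rewrite -cvg_shiftS.
rewrite /stable_queue.
apply: (@squeeze_cvge _ _ _ _ (cst 0%E) _ (fun V => (g V)%:E)).
- exists 0; split; first exact: num_real.
  move=> V V0.
  pose x n := (n%:R)^-1 * \sum_(tau < n) fine (P [set w | V < (Uq tau w)%:R]).
  pose y n := (n%:R)^-1 * \sum_(tau < n) (beta' tau + g V).
  have ax : (fun n : nat => (((n%:R)^-1)%:E * \sum_(tau < n) P [set w | (V < (Uq tau w)%:R)%R])%E)
      = (fun n => (x n)%:E).
    apply/funext => n; rewrite /x EFinM -sumEFin; congr (_ * _)%E.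
    by apply: eq_bigr => tau _; rewrite -P_fin.
  rewrite /Uq in ax; rewrite ax; apply/andP; split.
    apply: limn_esup_ge0 => n; rewrite lee_fin /x mulr_ge0 ?invr_ge0 //.
    by apply: sumr_ge0 => tau _; exact: pr_ge0.
  have xy n : x n <= y n.
    rewrite /x /y ler_wpM2l ?invr_ge0 //; apply: ler_sum => tau _; exact: step (ltW V0).
  have ycv : y @ \oo --> g V.
    rewrite -cvg_shiftS.
    suff -> : [sequence y n.+1]_n = arithmetic_mean (fun k => beta' k + g V).
      by have H := cesaro (cvgD hb' (cvg_cst (g V))); rewrite add0r in H; exact: H.
    by apply/funext => n; rewrite /arithmetic_mean /series /= big_mkord.
  have ycvE : (fun n => (y n)%:E) @ \oo --> (g V)%:E.
    by apply: cvg_EFin; [exact: nearW | exact: ycv].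
  rewrite -((cvg_limn_einf_sup ycvE).2); apply: le_limn_esup => n.
  by rewrite lee_fin.
- exact: cvg_cst.
- have H := @tail0 _ _ _ P _ (hAm 0%N i j); apply: cvg_EFin; [exact: nearW| exact: H].
Qed.
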